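(* Let $\mathcal{A}\in\mathbb{R}^{n\times n\times n}$ and $\mathcal{E}\in\mathbb{R}^{n\times n\times n}$ be such that $\mathcal{A}$ and $\tilde{\mathcal{A}}=\mathcal{A}+\mathcal{E}$ are piezoelectric-type tensors. Then $$\Big[\sqrt{(\lambda_{C\max}(\mathcal{A}))^2+\lambda_{Z\min}(\mathcal{S}_{\tilde{\mathcal{A}}}-\mathcal{S}_{\mathcal{A}})},\ \sqrt{(\lambda_{C\max}(\mathcal{A}))^2+\lambda_{Z\max}(\mathcal{S}_{\tilde{\mathcal{A}}}-\mathcal{S}_{\mathcal{A}})}\Big]\subseteq\big[\lambda_{C\max}(\mathcal{A})-\lambda_{C\max}(\mathcal{E}),\ \lambda_{C\max}(\mathcal{A})+\lambda_{C\max}(\mathcal{E})\big].$$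
   Context: A tensor $\mathcal{A}=(a_{ijk})\in\mathbb{R}^{n\times n\times n}$ is piezoelectric-type if $a_{ijk}=a_{ikj}$ for all $i,j,k$ (so $\mathcal{E}$ is piezoelectric-type too). For such $\mathcal{A}$, $\lambda_{C\max}(\mathcal{A})=\max\{\sum_{i,j,k}a_{ijk}x_iy_jy_k:\ \mathbf{x},\mathbf{y}\in\mathbb{R}^n,\ \mathbf{x}^T\mathbf{x}=\mathbf{y}^T\mathbf{y}=1\}$ is its largest $C$-eigenvalue (a $C$-eigenvalue being a real $\lambda$ with unit $\mathbf{x},\mathbf{y}$ satisfying $\sum_{j,k}a_{ijk}y_jy_k=\lambda x_i$ and $\sum_{j,k}a_{jki}x_jy_k=\lambda y_i$ for all $i$). The symmetric fourth-order tensor $\mathcal{S}_{\mathcal{A}}=(\bar b_{i_1i_2i_3i_4})$ is defined by $\bar b_{i_1i_2i_3i_4}=\frac13(b_{i_1i_2i_3i_4}+b_{i_1i_3i_2i_4}+b_{i_1i_4i_2i_3})$, where $b_{i_1i_2i_3i_4}=\sum_{i=1}^n a_{ii_1i_2}a_{ii_3i_4}$. For a symmetric fourth-order tensor $\mathcal{T}=(t_{i_1i_2i_3i_4})$, a $Z$-eigenvalue is a real $\lambda$ with some $\mathbf{x}\in\mathbb{R}^n$, $\mathbf{x}^T\mathbf{x}=1$, such that $\sum_{i_2,i_3,i_4}t_{ii_2i_3i_4}x_{i_2}x_{i_3}x_{i_4}=\lambda x_i$ for all $i$; $\lambda_{Z\max}(\mathcal{T})$ and $\lambda_{Z\min}(\mathcal{T})$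 denote the largest and smallest $Z$-eigenvalues, which equal respectively the maximum and minimum of $\mathcal{T}\mathbf{x}^4=\sum t_{i_1i_2i_3i_4}x_{i_1}x_{i_2}x_{i_3}x_{i_4}$ over unit vectors $\mathbf{x}\in\mathbb{R}^n$. *)

(* Defs.v *)
From HB Require Import structures.
From mathcomp Require Import all_boot all_order all_algebra.
From mathcomp Require Import reals.
Set Implicit Arguments. Unset Strict Implicit. Unset Printing Implicit Defensive.
Import Order.TTheory GRing.Theory Num.Theory.
Local Open Scope ring_scope.

Section Tensors.
Variables (R : realType) (n : nat).

Definition tensor3 := 'I_n -> 'I_n -> 'I_n -> R.
Definition tensor4 := 'I_n -> 'I_n -> 'I_n -> 'I_n -> R.
Definition vec := 'I_n -> R.

Definition add3 (A E : tensor3) : tensor3 := fun i j k => A i j k + E i j k.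
Definition sub4 (T U : tensor4) : tensor4 :=
  fun i1 i2 i3 i4 => T i1 i2 i3 i4 - U i1 i2 i3 i4.

Definition piezo (A : tensor3) : Prop := forall i j k, A i j k = A i k j.

Definition unitv (x : vec) : Prop := \sum_i x i ^+ 2 = 1.

Definition Cform (A : tensor3) (x y : vec) : R :=
  \sum_i \sum_j \sum_k A i j k * x i * y j * y k.

Definition is_lamCmax (A : tensor3) (lam : R) : Prop :=
  (exists x y, [/\ unitv x, unitv y & Cform A x y = lam]) /\
  (forall x y, unitv x -> unitv y -> Cform A x y <= lam).

Definition btens (A : tensor3) : tensor4 :=
  fun i1 i2 i3 i4 => \sum_i A i i1 i2 * A i i3 i4.

Definition SA (A : tensor3) : tensor4 :=
  fun i1 i2 i3 i4 =>
    (btens A i1 i2 i3 i4 + btens A i1 i3 i2 i4 + btens A i1 i4 i2 i3) / 3.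

Definition Zeig (T : tensor4) (lam : R) : Prop :=
  exists x : vec, unitv x /\
    forall i, \sum_i2 \sum_i3 \sum_i4 T i i2 i3 i4 * x i2 * x i3 * x i4
              = lam * x i.

Definition is_lamZmax (T : tensor4) (lam : R) : Prop :=
  Zeig T lam /\ forall mu, Zeig T mu -> mu <= lam.
Definition is_lamZmin (T : tensor4) (lam : R) : Prop :=
  Zeig T lam /\ forall mu, Zeig T mu -> lam <= mu.

End Tensors.

(* Main.v *)
Require Import Defs.
From HB Require Import structures.
From mathcomp Require Import all_boot all_order all_algebra.
From mathcomp Require Import reals.
From mathcomp Require Import ring lra.
Import Order.TTheory GRing.Theory Num.Theory.
Local Open Scope ring_scope.

Section S.
Variables (R : realType) (n : nat).
Implicit Types (A E : tensor3 R n) (x z : vec R n) (T : tensor4 R n).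

Definition vA A x : vec R n := fun i => \sum_j \sum_k A i j k * x j * x k.
Definition Q T x := \sum_i x i * \sum_b \sum_c \sum_d T i b c d * x b * x c * x d.
Definition H A x := \sum_a \sum_b \sum_c \sum_d \sum_i
   A i a b * A i c d * (x a * x b * x c * x d).

Lemma QD T U x : Q (fun a b c d => T a b c d + U a b c d) x = Q T x + Q U x.
Proof.
rewrite /Q -big_split; apply: eq_bigr => a _ /=. rewrite -mulrDr -big_split; congr (_ * _).
apply: eq_bigr => b _ /=; rewrite -big_split; apply: eq_bigr => c _ /=; rewrite -big_split.
by apply: eq_bigr => d _ /=; ring.
Qed.

Lemma QB T U x : Q (sub4 T U) x = Q T x - Q U x.
Proof.
rewrite /Q -sumrB; apply: eq_bigr => a _ /=; rewrite -mulrBr; congr (_ * _).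
rewrite -sumrB; apply: eq_bigr => b _ /=; rewrite -sumrB; apply: eq_bigr => c _ /=; rewrite -sumrB.
by apply: eq_bigr => d _ /=; rewrite /sub4; ring.
Qed.

Lemma Q3 T x : Q (fun a b c d => T a b c d / 3) x = Q T x / 3.
Proof.
rewrite /Q mulr_suml; apply: eq_bigr => a _ /=; rewrite -mulrA; congr (_ * _).
rewrite mulr_suml; apply: eq_bigr => b _ /=; rewrite mulr_suml; apply: eq_bigr => c _ /=; rewrite mulr_suml.
by apply: eq_bigr => d _ /=; ring.
Qed.

Lemma Qnorm T x (F0 : 'I_n -> 'I_n -> 'I_n -> 'I_n -> 'I_n -> R) :
  (forall a b c d, T a b c d = \sum_i F0 a b c d i) ->
  Q T x = \sum_a \sum_b \sum_c \sum_d \sum_i F0 a b c d i * (x a * x b * x c * x d).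
Proof.
move=> HT; rewrite /Q; apply: eq_bigr => a _ /=; rewrite mulr_sumr; apply: eq_bigr => b _.
rewrite mulr_sumr; apply: eq_bigr => c _ /=; rewrite mulr_sumr; apply: eq_bigr => d _.
rewrite HT !mulr_suml mulr_sumr; apply: eq_bigr => i _ /=; ring.
Qed.

Lemma vA2 A x : \sum_i vA A x i ^+ 2 = \sum_i \sum_a \sum_b \sum_c \sum_d
   A i a b * A i c d * (x a * x b * x c * x d).
Proof.
apply: eq_bigr => i _ /=; rewrite expr2 /vA mulr_suml; apply: eq_bigr => a _ /=.
rewrite mulr_suml; apply: eq_bigr => b _ /=; rewrite mulr_sumr; apply: eq_bigr => c _ /=.
rewrite mulr_sumr; apply: eq_bigr => d _ /=; ring.
Qed.

Lemma pull5 (F : 'I_n -> 'I_n -> 'I_n -> 'I_n -> 'I_n -> R) :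
  \sum_a \sum_b \sum_c \sum_d \sum_i F a b c d i =
  \sum_i \sum_a \sum_b \sum_c \sum_d F a b c d i.
Proof.
symmetry; rewrite exchange_big; apply: eq_bigr => a _ /=.
rewrite exchange_big; apply: eq_bigr => b _ /=.
rewrite exchange_big; apply: eq_bigr => c _ /=.
by rewrite exchange_big.
Qed.

Lemma QSA A x : Q (SA A) x = \sum_i vA A x i ^+ 2.
Proof.
rewrite vA2 -pull5.
rewrite /SA Q3.
rewrite (QD (fun a b c d => btens A a b c d + btens A a c b d)) QD.
rewrite (Qnorm _ x (fun a b c d i => A i a b * A i c d)) //.
rewrite (Qnorm (fun a b c d => btens A a c b d) x (fun a b c d i => A i a c * A i b d)) //.
rewrite (Qnorm (fun a b c d => btens A a d b c) x (fun a b c d i => A i a d * A i b c)) //.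
have -> : \sum_a \sum_b \sum_c \sum_d \sum_i A i a c * A i b d * (x a * x b * x c * x d) =
   \sum_a \sum_b \sum_c \sum_d \sum_i A i a b * A i c d * (x a * x b * x c * x d).
  apply: eq_bigr => a _ /=; rewrite exchange_big; apply: eq_bigr => c _ /=.
  apply: eq_bigr => b _ /=; apply: eq_bigr => d _ /=; apply: eq_bigr => i _ /=; ring.
have -> : \sum_a \sum_b \sum_c \sum_d \sum_i A i a d * A i b c * (x a * x b * x c * x d) =
   \sum_a \sum_b \sum_c \sum_d \sum_i A i a b * A i c d * (x a * x b * x c * x d).
  have -> : \sum_a \sum_b \sum_c \sum_d \sum_i A i a d * A i b c * (x a * x b * x c * x d) =
     \sum_a \sum_b \sum_d \sum_c \sum_i A i a d * A i b c * (x a * x b * x c * x d).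
    by apply: eq_bigr => a _ /=; apply: eq_bigr => b _ /=; rewrite exchange_big.
  apply: eq_bigr => a _ /=; rewrite exchange_big; apply: eq_bigr => d _ /=.
  apply: eq_bigr => b _ /=; apply: eq_bigr => c _ /=; apply: eq_bigr => i _ /=; ring.
by field.
Qed.

Lemma Cform_eq A u x : Cform A u x = \sum_i u i * vA A x i.
Proof.
apply: eq_bigr => i _ /=; rewrite /vA mulr_sumr; apply: eq_bigr => j _ /=.
rewrite mulr_sumr; apply: eq_bigr => k _ /=; ring.
Qed.

Lemma key A l x z : is_lamCmax A l -> unitv x ->
  \sum_i z i * vA A x i <= l * Num.sqrt (\sum_i z i ^+ 2).
Proof.
move=> [_ Hmax] ux.
set N := \sum_i z i ^+ 2.
have N0 : 0 <= N by apply: sumr_ge0 => i _; exact: sqr_ge0.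
have [NE|NN] := eqVneq N 0.
  have zi : forall i, z i = 0.
    move=> i; have := psumr_eq0P (fun i _ => sqr_ge0 (z i)) NE; move/(_ i isT).
    by move/eqP; rewrite sqrf_eq0 => /eqP.
  rewrite NE sqrtr0 mulr0 big1 // => i _; by rewrite zi mul0r.
have Np : 0 < N by rewrite lt_neqAle eq_sym NN N0.
have sp : 0 < Num.sqrt N by rewrite sqrtr_gt0.
have uu : unitv (fun i => z i / Num.sqrt N).
  rewrite /unitv; under eq_bigr do rewrite expr_div_n.
  by rewrite -mulr_suml sqr_sqrtr // divff.
have := Hmax _ x uu ux; rewrite Cform_eq.
have -> : \sum_i z i / Num.sqrt N * vA A x i = (\sum_i z i * vA A x i) / Num.sqrt N.
  by rewrite mulr_suml; apply: eq_bigr => i _; rewrite mulrAC.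
by rewrite ler_pdivrMr.
Qed.

Lemma keyN A l x z : is_lamCmax A l -> unitv x ->
  - (l * Num.sqrt (\sum_i z i ^+ 2)) <= \sum_i z i * vA A x i.
Proof.
move=> HA ux; have := @key A l x (fun i => - z i) HA ux.
under [X in Num.sqrt X]eq_bigr do rewrite /= sqrrN.
rewrite lerNl; apply: le_trans; rewrite -sumrN le_eqVlt; apply/orP; left; apply/eqP.
by apply: eq_bigr => i _; rewrite mulNr.
Qed.

Lemma lam_ge0 A l : is_lamCmax A l -> 0 <= l.
Proof.
move=> [[x [y [ux uy <-]]] Hmax].
have ux' : unitv (fun i => - x i) by rewrite /unitv; under eq_bigr do rewrite sqrrN.
have := Hmax _ _ ux' uy; rewrite !Cform_eq.
have -> : \sum_i - x i * vA A y i = - \sum_i x i * vA A y i.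
  by rewrite -sumrN; apply: eq_bigr => i _; rewrite mulNr.
move=> h; lra.
Qed.

Lemma vA_add A E x i : vA (add3 A E) x i = vA A x i + vA E x i.
Proof.
rewrite /vA -big_split; apply: eq_bigr => j _ /=; rewrite -big_split.
by apply: eq_bigr => k _ /=; rewrite /add3; ring.
Qed.

Lemma Zeig_Q T lam : Zeig T lam -> exists x, unitv x /\ Q T x = lam.
Proof.
move=> [x [ux Hx]]; exists x; split => //.
rewrite /Q; under eq_bigr do rewrite Hx.
by rewrite -[RHS]mulr1 -ux mulr_sumr; apply: eq_bigr => i _; rewrite mulrCA expr2.
Qed.

Lemma bounds A E lA lE T x : is_lamCmax A lA -> is_lamCmax E lE -> unitv x ->
  T = sub4 (SA (add3 A E)) (SA A) ->
  Q T x <= 2 * lA * lE + lE ^+ 2 /\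
  exists e, [/\ 0 <= e, e <= lE & e ^+ 2 - 2 * lA * e <= Q T x].
Proof.
move=> HA HE ux ->.
rewrite QB !QSA.
set v := vA A x; set w := vA E x.
have -> : \sum_i vA (add3 A E) x i ^+ 2 - \sum_i v i ^+ 2 =
   2 * \sum_i v i * w i + \sum_i w i ^+ 2.
  rewrite mulr_sumr -!big_split -sumrB; apply: eq_bigr => i _ /=; rewrite vA_add -/v -/w; ring.
have gv : 0 <= \sum_i v i ^+ 2 by apply: sumr_ge0 => i _; exact: sqr_ge0.
have gw : 0 <= \sum_i w i ^+ 2 by apply: sumr_ge0 => i _; exact: sqr_ge0.
have sv2 := sqr_sqrtr gv; have sw2 := sqr_sqrtr gw.
have sv0 := sqrtr_ge0 (\sum_i v i ^+ 2); have sw0 := sqrtr_ge0 (\sum_i w i ^+ 2).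
set sv := Num.sqrt (\sum_i v i ^+ 2) in sv2 sv0 *.
set sw := Num.sqrt (\sum_i w i ^+ 2) in sw2 sw0 *.
have lA0 := lam_ge0 _ _ HA; have lE0 := lam_ge0 _ _ HE.
have k1 := @key A lA x v HA ux.
have k2 := @key E lE x w HE ux.
have k3 := @key E lE x v HE ux.
have k4 := @keyN A lA x w HA ux.
have e4 : \sum_i w i * vA A x i = \sum_i v i * w i.
  by apply: eq_bigr => i _; rewrite mulrC.
rewrite e4 in k4.
rewrite -/v -/sv in k1; rewrite -/w -/sw in k2; rewrite -/w -/sv in k3; rewrite -/sw in k4.
have e1 : \sum_i v i * v i = sv ^+ 2 by rewrite sv2; apply: eq_bigr => i _; rewrite expr2.
have e2 : \sum_i w i * w i = sw ^+ 2 by rewrite sw2; apply: eq_bigr => i _; rewrite expr2.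
rewrite e1 in k1; rewrite e2 in k2.
rewrite -sw2.
have svl : sv <= lA by nra.
have swl : sw <= lE by nra.
split; first nra.
exists sw; split => //; nra.
Qed.
End S.
Arguments Zeig_Q {R n T lam}.
Arguments bounds {R n A E lA lE T x}.
Arguments lam_ge0 {R n A l}.

Theorem theorem2p3 (R : realType) (n : nat) (A E : tensor3 R n)
  (lA lE zmin zmax : R) :
  piezo A -> piezo (add3 A E) ->
  is_lamCmax A lA -> is_lamCmax E lE ->
  is_lamZmin (sub4 (SA (add3 A E)) (SA A)) zmin ->
  is_lamZmax (sub4 (SA (add3 A E)) (SA A)) zmax ->
  forall t : R,
    t \in `[Num.sqrt (lA ^+ 2 + zmin), Num.sqrt (lA ^+ 2 + zmax)] ->
    t \in `[lA - lE, lA + lE].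
Proof.
move=> _ _ HA HE [Zmin _] [Zmax _] t.
have [x1 [u1 q1]] := Zeig_Q Zmin; have [x2 [u2 q2]] := Zeig_Q Zmax.
have [b2 _] := bounds HA HE u2 erefl; rewrite q2 in b2.
have [_ [e [e0 eL b1]]] := bounds HA HE u1 erefl; rewrite q1 in b1.
have lA0 := lam_ge0 HA; have lE0 := lam_ge0 HE.
rewrite !in_itv /= => /andP [h1 h2]; apply/andP; split.
- case: (leP lE lA) => hl.
    apply: le_trans h1.
    have : (lA - lE) ^+ 2 <= lA ^+ 2 + zmin by nra.
    move/ler_wsqrtr; rewrite sqrtr_sqr ger0_norm //; lra.
  apply: le_trans h1; apply: le_trans (sqrtr_ge0 _); lra.
- apply: (le_trans h2).
  have : lA ^+ 2 + zmax <= (lA + lE) ^+ 2 by nra.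
  move/ler_wsqrtr; rewrite sqrtr_sqr ger0_norm //; lra.
Qed.
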